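(* Let $(T(\mathcal{A})=\mathcal{A}\oplus\mathcal{A}^*,\ast,\omega)$ be a double construction of symplectic antiassociative algebra associated to $\mathcal{A}$ and $\mathcal{A}^*$. Then the formulas $\omega(u\succ v,w)=\omega(v,w\ast u)$, $\omega(u\prec v,w)=\omega(u,v\ast w)$ ($u,v,w\in T(\mathcal{A})$) define a compatible antidendriform algebra structure on $(T(\mathcal{A}),\ast)$, and $\mathcal{A}$ and $\mathcal{A}^*$ are antidendriform subalgebras of $(T(\mathcal{A}),\succ,\prec)$.
   Context: An antiassociative algebra is a vector space with bilinear product satisfying $(x\ast y)\ast z=-x\ast(y\ast z)$. Let $\mathcal{A}$ be a finite-dimensional vector space. A double construction of symplectic antiassociative algebra associated to antiassociative algebras $\mathcal{A}$ and $\mathcal{A}^*$ (on the dual space) is an antiassociative product $\ast$ on $\mathcal{A}\oplus\mathcal{A}^*$ such that $\mathcal{A}$ and $\mathcal{A}^*$ are subalgebras (with their given products) and the non-degenerate skew-symmetric form $\omega(x+a^*,y+b^* )=-\langle x,b^*\rangle+\langle a^*,y\rangle$ satisfies $\omega(u\ast v,w)+\omega(v\ast w,u)+\omega(w\ast u,v)=0$ for all $u,v,w$. An antidendriform algebra is a vector space with bilinear products $\prec,\succ$ such that, with $x\star y=x\prec y+x\succ y$: $(x\prec y)\prec z=-x\prec(y\star z)$, $(x\succ y)\prec z=-x\succ(y\prec z)$, $x\succ(y\succ z)=-(x\star y)\succ z$; it is compatible with $\ast$ if $x\succ y+x\prec y=x\ast y$. *)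

(* Defs.v *)
From mathcomp Require Import all_boot all_algebra.
Set Implicit Arguments. Unset Strict Implicit. Unset Printing Implicit Defensive.
Import GRing.Theory.
Local Open Scope ring_scope.

(* The finite-dimensional space A is modelled as 'rV[K]_n, its dual A^* also
   as 'rV[K]_n, with the canonical pairing <x, a^*> = sum_i x_i a^*_i. *)
Definition pairing (K : fieldType) (n : nat) (x a : 'rV[K]_n) : K :=
  \sum_(i < n) x 0 i * a 0 i.

Definition TA (K : fieldType) (n : nat) := ('rV[K]_n * 'rV[K]_n)%type.

Definition omega (K : fieldType) (n : nat) (u v : TA K n) : K :=
  - pairing u.1 v.2 + pairing v.1 u.2.

Definition inA (K : fieldType) (n : nat) (x : 'rV[K]_n) : TA K n := (x, 0).
Definition inAs (K : fieldType) (n : nat) (a : 'rV[K]_n) : TA K n := (0, a).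

Definition bilinear_op (K : fieldType) (V : lmodType K) (f : V -> V -> V) :=
  (forall (c : K) (x y z : V), f (c *: x + y) z = c *: f x z + f y z) /\
  (forall (c : K) (x y z : V), f z (c *: x + y) = c *: f z x + f z y).

Definition antiassociative (T : Type) (opp : T -> T) (f : T -> T -> T) :=
  forall x y z, f (f x y) z = opp (f x (f y z)).

Definition antiassoc_alg (K : fieldType) (V : lmodType K) (f : V -> V -> V) :=
  bilinear_op f /\ antiassociative (fun v : V => - v) f.

Definition antidendriform (K : fieldType) (V : lmodType K)
    (succ prec : V -> V -> V) :=
  bilinear_op succ /\ bilinear_op prec /\
  let star x y := prec x y + succ x y in
  (forall x y z : V, prec (prec x y) z = - prec x (star y z)) /\
  (forall x y z : V, prec (succ x y) z = - succ x (prec y z)) /\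
  (forall x y z : V, succ x (succ y z) = - succ (star x y) z).

Definition double_construction (K : fieldType) (n : nat)
    (mulA mulAs : 'rV[K]_n -> 'rV[K]_n -> 'rV[K]_n) (mul : TA K n -> TA K n -> TA K n) :=
  antiassoc_alg mulA /\ antiassoc_alg mulAs /\ antiassoc_alg mul /\
  (forall x y, mul (inA x) (inA y) = inA (mulA x y)) /\
  (forall a b, mul (inAs a) (inAs b) = inAs (mulAs a b)) /\
  (forall u v w, omega (mul u v) w + omega (mul v w) u + omega (mul w u) v = 0).

(* Main.v *)
Require Import Defs.
From mathcomp Require Import all_boot all_algebra ring.
Set Implicit Arguments. Unset Strict Implicit.
Local Open Scope ring_scope.
Import GRing.Theory.

Section S.
Variables (K : fieldType) (n : nat).
Implicit Types (u v w X Y : TA K n) (x y : 'rV[K]_n).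

Lemma pairingDl (c : K) x y (a : 'rV[K]_n) :
  pairing (c *: x + y) a = c * pairing x a + pairing y a.
Proof.
rewrite /pairing mulr_sumr -big_split /=; apply: eq_bigr => i _.
by rewrite !mxE mulrDl mulrA.
Qed.
Lemma pairingDr (c : K) x y (a : 'rV[K]_n) :
  pairing a (c *: x + y) = c * pairing a x + pairing a y.
Proof.
rewrite /pairing mulr_sumr -big_split /=; apply: eq_bigr => i _.
by rewrite !mxE mulrDr mulrCA.
Qed.

Lemma omegaDl (c : K) X Y w : omega (c *: X + Y) w = c * omega X w + omega Y w.
Proof. rewrite /omega /= pairingDl pairingDr; ring. Qed.
Lemma omegaDr (c : K) X Y w : omega w (c *: X + Y) = c * omega w X + omega w Y.
Proof. rewrite /omega /= pairingDl pairingDr; ring. Qed.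
Lemma omegaN u v : omega u v = - omega v u.
Proof. rewrite /omega; ring. Qed.
Lemma omegaNr u v : omega u (- v) = - omega u v.
Proof.
have := omegaDr (-1) v 0 u; rewrite scaleN1r addr0 => ->.
have -> : omega u 0 = 0.
  by rewrite /omega /pairing /= !big1 ?oppr0 ?addr0 // => i _; rewrite mxE ?mulr0 ?mul0r.
ring.
Qed.

Lemma pairing_e x i : pairing x 'e_i = x 0 i.
Proof.
rewrite /pairing (bigD1 i) //= big1 ?addr0 => [|j ji]; rewrite mxE eqxx ?eqxx /=.
  by rewrite mulr1.
by rewrite (negbTE ji) mulr0.
Qed.
Lemma pairing_e' x i : pairing 'e_i x = x 0 i.
Proof.
rewrite /pairing (bigD1 i) //= big1 ?addr0 => [|j ji]; rewrite mxE eqxx ?eqxx /=.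
  by rewrite mul1r.
by rewrite (negbTE ji) mul0r.
Qed.

Lemma omega_e1 X i : omega X (0, 'e_i) = - X.1 0 i.
Proof. by rewrite /omega /= pairing_e /pairing big1 ?addr0 // => j _; rewrite mxE mul0r. Qed.
Lemma omega_e2 X i : omega X ('e_i, 0) = X.2 0 i.
Proof. by rewrite /omega /= pairing_e' /pairing big1 ?oppr0 ?add0r // => j _; rewrite mxE mulr0. Qed.

Lemma omega_inj X Y : (forall w, omega X w = omega Y w) -> X = Y.
Proof.
move=> H; case: X Y H => [p q] [p' q'] H.
congr pair; apply/rowP => i.
  by have := H (0, 'e_i); rewrite !omega_e1 /= => /oppr_inj.
by have := H ('e_i, 0); rewrite !omega_e2.
Qed.

Definition linf (f : TA K n -> K) :=
  forall (c : K) u v, f (c *: u + v) = c * f u + f v.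

Definition rep (f : TA K n -> K) : TA K n :=
  (\row_i - f (0, 'e_i), \row_i f ('e_i, 0)).

Lemma rep_spec f : linf f -> forall w, omega (rep f) w = f w.
Proof.
move=> lf [y b].
have f0 : f 0 = 0.
  by have := lf (-1) 0 0; rewrite scaleN1r addNr mulN1r addNr.
have fD : {morph f : a b / a + b}.
  by move=> a b'; rewrite -[a]scale1r lf mul1r scale1r.
have fZ : forall c a, f (c *: a) = c * f a.
  by move=> c a; rewrite -[c *: a]addr0 lf f0 addr0.
have -> : (y, b) = (y, 0) + (0, b) :> TA K n by change ((y, b) = (y + 0, 0 + b)); rewrite addr0 add0r.
rewrite fD /omega /pairing /=.
rewrite addr0 add0r [in f (y, 0)](row_sum_delta y) [in f (0, b)](row_sum_delta b).
have -> : ((\sum_(j < n) y 0 j *: 'e_j, 0) : TA K n) = \sum_(j < n) y 0 j *: ('e_j, 0).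
  rewrite (@big_morph _ _ (fun x => (x, 0) : TA K n) 0 +%R 0 +%R) //; last first.
    by move=> a c; change ((a + c, 0) = (a + c, 0 + 0) :> TA K n); rewrite addr0.
  by apply: eq_bigr => j _; apply: injective_projections => //=; rewrite scaler0.
have -> : ((0, \sum_(j < n) b 0 j *: 'e_j) : TA K n) = \sum_(j < n) b 0 j *: (0, 'e_j).
  rewrite (@big_morph _ _ (fun x => (0, x) : TA K n) 0 +%R 0 +%R) //; last first.
    by move=> a c; change ((0, a + c) = (0 + 0, a + c) :> TA K n); rewrite addr0.
  by apply: eq_bigr => j _; apply: injective_projections => //=; rewrite scaler0.
rewrite !(big_morph f fD f0) addrC -sumrN; congr (_ + _); apply: eq_bigr => i _;
  rewrite fZ !mxE; ring.
Qed.

Lemma omegaNl u v : omega (- u) v = - omega u v.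
Proof. by rewrite omegaN omegaNr omegaN opprK. Qed.
Lemma omegaD X Y w : omega (X + Y) w = omega X w + omega Y w.
Proof. by rewrite -[X]scale1r omegaDl mul1r scale1r. Qed.
Lemma omegaA0 x y : omega (inA x) (inA y) = 0.
Proof. by rewrite /omega /pairing /= !big1 ?oppr0 ?addr0 // => i _; rewrite mxE ?mulr0 ?mul0r. Qed.
Lemma omegaS0 x y : omega (inAs x) (inAs y) = 0.
Proof. by rewrite /omega /pairing /= !big1 ?oppr0 ?addr0 // => i _; rewrite mxE ?mulr0 ?mul0r. Qed.
End S.

Unset Implicit Arguments.

Theorem mainTheorem12 (K : fieldType) (n : nat)
    (mulA mulAs : 'rV[K]_n -> 'rV[K]_n -> 'rV[K]_n)
    (mul : TA K n -> TA K n -> TA K n) :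
  double_construction mulA mulAs mul ->
  exists succ prec : TA K n -> TA K n -> TA K n,
    (forall u v w, omega (succ u v) w = omega v (mul w u)) /\
    (forall u v w, omega (prec u v) w = omega u (mul v w)) /\
    antidendriform succ prec /\
    (forall u v, succ u v + prec u v = mul u v) /\
    (forall x y, exists z t, succ (inA x) (inA y) = inA z /\ prec (inA x) (inA y) = inA t) /\
    (forall a b, exists c d, succ (inAs a) (inAs b) = inAs c /\ prec (inAs a) (inAs b) = inAs d).
Proof.
move=> [_ [_ [[[ml mr] am] [hA [hS cyc]]]]].
pose succ u v := rep (fun w => omega v (mul w u)).
pose prec u v := rep (fun w => omega u (mul v w)).
have sS u v w : omega (succ u v) w = omega v (mul w u).
  by apply: rep_spec => c a b; rewrite ml omegaDr.
have pS u v w : omega (prec u v) w = omega u (mul v w).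
  by apply: rep_spec => c a b; rewrite mr omegaDr.
have comp u v : succ u v + prec u v = mul u v.
  apply: omega_inj => w; rewrite omegaD sS pS.
  move: (cyc u v w); rewrite (omegaN v) (omegaN u) -addrA => /eqP.
  rewrite addr_eq0 => /eqP ->; ring.
have star x y : prec x y + succ x y = mul x y by rewrite addrC comp.
exists succ, prec; split; first exact: sS.
split; first exact: pS.
split.
  split.
    split=> c x y z; apply: omega_inj => w; rewrite omegaDl !sS.
      by rewrite mr omegaDr.
    by rewrite omegaDl.
  split.
    split=> c x y z; apply: omega_inj => w; rewrite omegaDl !pS.
      by rewrite omegaDl.
    by rewrite ml omegaDr.
  rewrite /=; split.
    move=> x y z; apply: omega_inj => w.
    by rewrite star omegaNl !pS am omegaNr opprK.
  split.
    move=> x y z; apply: omega_inj => w.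
    by rewrite omegaNl pS sS sS pS am omegaNr.
  move=> x y z; apply: omega_inj => w.
  by rewrite star omegaNl !sS am omegaNr.
split; first exact: comp.
split.
  move=> x y; exists (succ (inA x) (inA y)).1, (prec (inA x) (inA y)).1.
  split; apply: injective_projections => //; apply/rowP => i;
    rewrite [RHS](_ : _ = 0); try by rewrite /inA /= mxE.
    by rewrite -omega_e2 sS hA omegaA0.
  by rewrite -omega_e2 pS hA omegaA0.
move=> x y; exists (succ (inAs x) (inAs y)).2, (prec (inAs x) (inAs y)).2.
split; apply: injective_projections => //; apply/rowP => i;
  rewrite [RHS](_ : _ = 0); try (by rewrite /inAs /= mxE);
  apply: oppr_inj; rewrite -omega_e1 oppr0.
  by rewrite sS hS omegaS0.
by rewrite pS hS omegaS0.
Qed.
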